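(* Let $d$ be a power of $2$, $1\le k\le d$, and $\delta>0$. Let $g_{a,c}(x)=a(x-c)\bmod d$. Let $L=O(\log^2(d/k))$ and $B=O(k\log(d/\delta))$, and let $(a_1,c_1),\ldots,(a_L,c_L)$ be any pairs of integers in $\{1,\ldots,d\}$ with each $a_\ell$ odd. Then there is a set $R\subseteq\{0,\ldots,d-1\}$ with $|R|=O\big(\sqrt{k\log(d/\delta)}\cdot\log^2(d/k)\big)$ such that for every $\ell\in\{1,\ldots,L\}$ and every $s\in\{0,\ldots,B-1\}$ there exist $r,r'\in R$ with $r-r'=g_{a_\ell,c_\ell}(s)$ or $r-r'=d-g_{a_\ell,c_\ell}(s)$. Consequently, for any $x^{(1)},\dots,x^{(n)}$ drawn from a distribution whose covariance matrix $T$ is circulant with first column $t$ (so $t_u=t_{d-u}$), reading only the entries indexed by $R$ of each sample yields measurements of all entries $t_{g_{a_\ell,c_\ell}(s)}$ read by the sparse Fourier transform procedure described in the context.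
   Context: The sparse Fourier transform procedure referred to: a randomized algorithm which, given $x\in\mathbb{R}^d$ ($d$ a power of 2), sparsity $k$ and error parameter $\delta$, chooses $L=O(\log^2(d/k))$ pairs $(a_\ell,c_\ell)$ uniformly from $\{1,\dots,d\}$ with $a_\ell$ odd, and reads only the blocks of entries $x_{g_{a_\ell,c_\ell}(0)},\dots,x_{g_{a_\ell,c_\ell}(B-1)}$ with $B=O(k\log(d/\delta))$. The implied constants in $|R|$ depend only on those in $L$ and $B$. *)

(* Defs.v *)
From Stdlib Require Import Reals ZArith List.
Open Scope R_scope.

Definition g (d a c x : Z) : Z := Z.modulo (a * (x - c)) d.

Definition is_pow2 (d : nat) : Prop := exists m : nat, d = (2 ^ m)%nat.

(* Main.v *)
Require Import Defs.
From Stdlib Require Import Reals ZArith List Lia Lra.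
Open Scope R_scope.

Lemma flat_map_len_const {A B : Type} (f : A -> list B) (n : nat) (l : list A) :
  (forall x, length (f x) = n) -> length (flat_map f l) = (length l * n)%nat.
Proof.
  intros H; induction l as [|x l IH]; simpl; auto.
  rewrite length_app, H, IH; reflexivity.
Qed.

Definition blk (d : Z) (m : nat) (a c : Z) : list Z :=
  map (fun i => ((a * (Z.of_nat (i * m) - c)) mod d)%Z) (seq 0 m) ++
  map (fun j => ((- a * Z.of_nat j) mod d)%Z) (seq 0 m).

Definition mkR (d : Z) (m L : nat) (a c : nat -> Z) : list Z :=
  nodup Z.eq_dec (flat_map (fun l => blk d m (a l) (c l)) (seq 1 L)).

Lemma mkR_len d m L a c : (length (mkR d m L a c) <= L * (2 * m))%nat.
Proof.
  unfold mkR. eapply Nat.le_trans. apply NoDup_incl_length.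
  apply NoDup_nodup. intros x Hx. apply nodup_In in Hx. exact Hx.
  rewrite (flat_map_len_const _ (2*m)). rewrite length_seq; lia.
  intros x; unfold blk; rewrite length_app, !length_map, length_seq; lia.
Qed.

Lemma mkR_range d m L a c : (0 < d)%Z -> forall r, In r (mkR d m L a c) -> (0 <= r < d)%Z.
Proof.
  intros Hd r Hr. unfold mkR in Hr. apply nodup_In, in_flat_map in Hr.
  destruct Hr as [l [_ Hr]]. unfold blk in Hr. apply in_app_iff in Hr.
  destruct Hr as [Hr|Hr]; apply in_map_iff in Hr; destruct Hr as [x [<- _]];
  apply Z.mod_pos_bound; exact Hd.
Qed.

Lemma mkR_cover d m L a c l s : (0 < d)%Z -> (1 <= l <= L)%nat -> (s < m * m)%nat ->
  exists r r', In r (mkR d m L a c) /\ In r' (mkR d m L a c) /\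
    ((r - r') mod d = g d (a l) (c l) (Z.of_nat s))%Z.
Proof.
  intros Hd Hl Hs.
  assert (Hm : (0 < m)%nat) by (destruct m; lia).
  set (i := (s / m)%nat). set (j := (s mod m)%nat).
  assert (Hsij : s = (i * m + j)%nat).
  { unfold i, j. pose proof (Nat.div_mod s m). lia. }
  assert (Hi : (i < m)%nat). { unfold i. apply Nat.Div0.div_lt_upper_bound. lia. }
  assert (Hj : (j < m)%nat). { unfold j. apply Nat.mod_upper_bound. lia. }
  exists ((a l * (Z.of_nat (i * m) - c l)) mod d)%Z, ((- a l * Z.of_nat j) mod d)%Z.
  assert (Hin : forall x, In x (blk d m (a l) (c l)) -> In x (mkR d m L a c)).
  { intros x Hx. unfold mkR. apply nodup_In, in_flat_map. exists l; split; auto.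
    apply in_seq; lia. }
  split; [|split].
  - apply Hin. unfold blk. apply in_app_iff; left. apply in_map_iff. exists i; split; auto.
    apply in_seq; lia.
  - apply Hin. unfold blk. apply in_app_iff; right. apply in_map_iff. exists j; split; auto.
    apply in_seq; lia.
  - unfold g. rewrite <- Zminus_mod. f_equal. rewrite Hsij.
    rewrite Nat2Z.inj_add. ring.
Qed.

Theorem corollary1 :
  forall CL CB : R, 0 < CL -> 0 < CB ->
  exists C : R, 0 < C /\
  forall (d k : nat) (delta : R) (L B : nat) (a c : nat -> Z),
    is_pow2 d ->
    (1 <= k <= d)%nat ->
    0 < delta ->
    INR L <= CL * (ln (INR d / INR k)) ^ 2 ->
    INR B <= CB * (INR k * ln (INR d / delta)) ->
    (forall l : nat, (1 <= l <= L)%nat ->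
       (1 <= a l <= Z.of_nat d)%Z /\ (1 <= c l <= Z.of_nat d)%Z /\ Z.odd (a l) = true) ->
    exists Rs : list Z,
      NoDup Rs /\
      (forall r, In r Rs -> (0 <= r < Z.of_nat d)%Z) /\
      INR (length Rs) <= C * sqrt (INR k * ln (INR d / delta)) * (ln (INR d / INR k)) ^ 2 /\
      (forall l s : nat, (1 <= l <= L)%nat -> (s < B)%nat ->
         exists r r', In r Rs /\ In r' Rs /\
           ((r - r' = g (Z.of_nat d) (a l) (c l) (Z.of_nat s))%Z \/
            (r - r' = Z.of_nat d - g (Z.of_nat d) (a l) (c l) (Z.of_nat s))%Z)) /\
      (* consequence: for a circulant (covariance) matrix T with symmetric first column t,
         the entries indexed by Rs give all entries t_{g(s)} *)
      (forall (t : Z -> R) (T : Z -> Z -> R),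
         (forall u, (0 < u < Z.of_nat d)%Z -> t u = t (Z.of_nat d - u)%Z) ->
         (forall i j, (0 <= i < Z.of_nat d)%Z -> (0 <= j < Z.of_nat d)%Z ->
            T i j = t (Z.modulo (i - j) (Z.of_nat d))) ->
         forall l s : nat, (1 <= l <= L)%nat -> (s < B)%nat ->
           exists r r', In r Rs /\ In r' Rs /\
             T r r' = t (g (Z.of_nat d) (a l) (c l) (Z.of_nat s))).
Proof.
  intros CL CB HCL HCB.
  exists (4 * CL * sqrt CB). split.
  { pose proof (sqrt_lt_R0 CB HCB). nra. }
  intros d k delta L B a c _ Hk Hdelta HL HB _.
  assert (Hd : (0 < Z.of_nat d)%Z) by lia.
  set (m := (Nat.sqrt B + 1)%nat).
  assert (HmB : (B < m * m)%nat).
  { pose proof (Nat.sqrt_spec B (Nat.le_0_l B)) as [_ H]. unfold m. lia. }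
  set (Rs := if Nat.eq_dec B 0 then nil else mkR (Z.of_nat d) m L a c).
  assert (Hcov : forall l s, (1 <= l <= L)%nat -> (s < B)%nat ->
    exists r r', In r Rs /\ In r' Rs /\
    ((r - r') mod Z.of_nat d = g (Z.of_nat d) (a l) (c l) (Z.of_nat s))%Z).
  { intros l s Hl Hs. unfold Rs. destruct (Nat.eq_dec B 0); [lia|].
    apply mkR_cover; auto; lia. }
  assert (Hrng : forall r, In r Rs -> (0 <= r < Z.of_nat d)%Z).
  { unfold Rs. destruct (Nat.eq_dec B 0). intros r []. apply mkR_range; auto. }
  exists Rs. split; [|split; [exact Hrng|split; [|split]]].
  - unfold Rs. destruct (Nat.eq_dec B 0). constructor. apply NoDup_nodup.
  - unfold Rs. destruct (Nat.eq_dec B 0) as [HB0|HB0].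
    + simpl. pose proof (sqrt_pos CB). pose proof (sqrt_pos (INR k * ln (INR d / delta))).
      pose proof (pow2_ge_0 (ln (INR d / INR k))).
      apply Rmult_le_pos; [apply Rmult_le_pos|]; nra.
    + pose proof (mkR_len (Z.of_nat d) m L a c) as Hlen.
      apply le_INR in Hlen. eapply Rle_trans; [exact Hlen|].
      rewrite !mult_INR. unfold m. rewrite plus_INR. simpl (INR 2). simpl (INR 1).
      set (X := INR k * ln (INR d / delta)) in *.
      set (Y := ln (INR d / INR k) ^ 2) in *.
      assert (HB1 : 1 <= INR B) by (apply (le_INR 1); lia).
      assert (HX : 0 <= X) by nra.
      assert (Hs1 : INR (Nat.sqrt B) <= sqrt (INR B)).
      { rewrite <- (sqrt_pow2 (INR (Nat.sqrt B))) by apply pos_INR.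
        apply sqrt_le_1_alt. rewrite <- pow_INR. apply le_INR.
        pose proof (Nat.sqrt_spec B (Nat.le_0_l B)) as [H _]. simpl. lia. }
      assert (Hs2 : sqrt (INR B) <= sqrt CB * sqrt X).
      { rewrite <- sqrt_mult by lra. apply sqrt_le_1_alt. lra. }
      assert (Hs3 : 1 <= sqrt CB * sqrt X).
      { rewrite <- sqrt_mult by lra. rewrite <- sqrt_1. apply sqrt_le_1_alt. lra. }
      assert (Hm' : INR (Nat.sqrt B) + 1 <= 2 * (sqrt CB * sqrt X)) by lra.
      pose proof (pos_INR L). pose proof (pos_INR (Nat.sqrt B)).
      assert (INR L * (INR (Nat.sqrt B) + 1) <= (CL * Y) * (2 * (sqrt CB * sqrt X))).
      { apply Rmult_le_compat; lra. }
      nra.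
  - intros l s Hl Hs. destruct (Hcov l s Hl Hs) as [r [r' [Hr [Hr' He]]]].
    pose proof (Hrng r Hr). pose proof (Hrng r' Hr').
    destruct (Z_le_gt_dec 0 (r - r')).
    + exists r, r'. split; auto. split; auto. left.
      rewrite <- He. rewrite Z.mod_small; lia.
    + exists r', r. split; auto. split; auto. right.
      rewrite <- He. rewrite <- (Z_mod_plus_full (r - r') 1).
      rewrite Z.mod_small; lia.
  - intros t T _ HT l s Hl Hs. destruct (Hcov l s Hl Hs) as [r [r' [Hr [Hr' He]]]].
    exists r, r'. split; auto. split; auto. rewrite HT; auto. rewrite He; auto.
Qed.
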